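(* Let $G=\{1,\dots,d\}^m$ and let $S\subseteq G$ be the set of groups obtained by sampling groups independently and uniformly at random from $G$. Let $c>0$. If the total number of groups sampled is greater than $2cd(m+1+\ln d)$, then $\mathsf{DAff}(S)=G$ with probability at least $1-\frac1c$.
   Context: For $z\in G$, $\sigma(z)\in\{0,1\}^{md}$ is the concatenation of the one-hot encodings of $z_1,\dots,z_m$. For a finite $\mathcal{A}=\{z^{(1)},\dots,z^{(k)}\}\subseteq G$, $\mathsf{DAff}(\mathcal{A})=\{z\in G:\exists\alpha\in\mathbb{R}^k,\ \sum_i\alpha_i=1,\ \sigma(z)=\sum_i\alpha_i\sigma(z^{(i)})\}$, i.e. the set of points of $G$ whose encodings lie in the (ordinary) affine hull of the encodings of $\mathcal{A}$. *)

(* Defs.v *)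
From HB Require Import structures.
From mathcomp Require Import all_boot all_order all_algebra.
From mathcomp Require Import boolp reals exp.
Set Implicit Arguments. Unset Strict Implicit. Unset Printing Implicit Defensive.
Import Order.TTheory GRing.Theory Num.Theory.
Local Open Scope ring_scope.

Definition grid (d m : nat) : finType := {ffun 'I_m -> 'I_d}.

(* sigma(z) in {0,1}^{md}: concatenation of one-hot encodings,
   indexed by pairs (coordinate i, value j) *)
Definition onehot (R : ringType) (d m : nat) (z : grid d m) (k : 'I_m * 'I_d) : R :=
  (z k.1 == k.2)%:R.

Definition in_DAff (R : realType) (d m : nat) (A : {set grid d m}) (z : grid d m) : Prop :=
  exists alpha : grid d m -> R,
    \sum_(x in A) alpha x = 1 /\
    forall k : 'I_m * 'I_d, onehot R z k = \sum_(x in A) alpha x * onehot R x k.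

Definition DAff_full (R : realType) (d m : nat) (A : {set grid d m}) : Prop :=
  forall z : grid d m, in_DAff R A z.

Definition sample_set (d m n : nat) (t : {ffun 'I_n -> grid d m}) : {set grid d m} :=
  [set t i | i : 'I_n].

(* probability, over n independent uniform samples from G, that DAff(S) = G *)
Definition prob_DAff_full (R : realType) (d m n : nat) : R :=
  (#|[set t : {ffun 'I_n -> grid d m} | `[< DAff_full R (sample_set t) >]]|%:R)
  / ((#|{: grid d m}| ^ n)%N)%:R.

(* Main.v *)
Require Import Defs.
From HB Require Import structures.
From mathcomp Require Import all_boot all_order all_algebra.
From mathcomp Require Import boolp reals exp.
From mathcomp Require Import ring lra zify.
Set Implicit Arguments. Unset Strict Implicit. Unset Printing Implicit Defensive.
Import Order.TTheory GRing.Theory Num.Theory.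
Local Open Scope ring_scope.

Lemma size_filterC1 d (a0 : 'I_d) : size [seq x <- enum 'I_d | predC1 a0 x] = d.-1.
Proof.
rewrite size_filter -[d in d.-1]card_ord -(cardC1 a0) cardE /enum_mem size_filter.
by rewrite (eq_filter (a2:=predT)) // filter_predT.
Qed.

Lemma sum_ind (R : numDomainType) (T : finType) (A : {set T}) :
  \sum_x ((x \in A)%:R : R) = #|A|%:R.
Proof.
rewrite (eq_bigr (fun x => if x \in A then (1 : R) else 0)) => [|x _]; last by case: (x \in A).
by rewrite -big_mkcond sumr_const.
Qed.

Lemma harm (R : realType) N : (0 < N)%N ->
  \sum_(j < N) (j.+1%:R : R)^-1 <= 1 + ln (N%:R : R).
Proof.
case: N => // N _; elim: N => [|N IH].
  by rewrite big_ord1 invr1 ln1 addr0.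
rewrite big_ord_recr /=.
have Np : (0 : R) < N.+1%:R by rewrite ltr0n.
have Np2 : (0 : R) < N.+2%:R by rewrite ltr0n.
suff h : (N.+2%:R : R)^-1 <= ln N.+2%:R - ln N.+1%:R.
  by apply: le_trans (lerD IH h) _; lra.
have := @le_ln1Dx R (- (N.+2%:R)^-1).
rewrite -ln_div ?posrE //.
have -> : 1 - (N.+2%:R : R)^-1 = N.+1%:R / N.+2%:R.
  have e : (N.+2%:R : R) = N.+1%:R + 1 by rewrite -natr1.
  by rewrite e; field; rewrite gt_eqF //; have := ler0n R N; lra.
have h1 : - 1 < - (N.+2%:R : R)^-1.
  by rewrite ltrN2 invf_lt1 // ltr1n.
move=> /(_ h1) h2; rewrite ln_div ?posrE // in h2; rewrite ln_div ?posrE //.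
by rewrite -lerN2 opprB.
Qed.

Section Lin.
Variables (R : realType) (d m : nat).
Local Notation G := (grid d m).
Definition V := {ffun option ('I_m * 'I_d) -> R^o}.
Definition sig (z : G) : V :=
  [ffun k => if k is Some p then onehot R z p else 1].
Definition sp (A : {set G}) : {vspace V} := <<[seq sig x | x <- enum A]>>%VS.
Definition rk (A : {set G}) : nat := \dim (sp A).
Definition fullb (A : {set G}) : bool := (sp setT <= sp A)%VS.

Lemma sp_mem (A : {set G}) x : x \in A -> sig x \in sp A.
Proof. by move=> xA; apply: memv_span; apply: map_f; rewrite mem_enum. Qed.

Lemma sp_sub (A : {set G}) (U : {vspace V}) : (forall x, x \in A -> sig x \in U) -> (sp A <= U)%VS.
Proof.
move=> H; apply/span_subvP => v /mapP [x]; rewrite mem_enum => xA ->; exact: H.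
Qed.

Lemma sp_mono (A B : {set G}) : A \subset B -> (sp A <= sp B)%VS.
Proof. by move=> /subsetP AB; apply: sp_sub => x /AB; apply: sp_mem. Qed.

Lemma rk_mono (A B : {set G}) : A \subset B -> (rk A <= rk B)%N.
Proof. by move=> AB; apply: dimvS; apply: sp_mono. Qed.

Lemma fullb_mono (A B : {set G}) : A \subset B -> fullb A -> fullb B.
Proof. by move=> AB fA; apply: subv_trans fA (sp_mono AB). Qed.

Lemma rk_add (A : {set G}) z : sig z \notin sp A -> (rk A < rk (z |: A))%N.
Proof.
move=> zA.
have H1 : (<[sig z]> + sp A <= sp (z |: A))%VS.
  rewrite subv_add -memvE sp_mem ?setU11 //=; apply: sp_mono; exact: subsetUr.
apply: leq_trans (dimvS H1).
rewrite (ltn_leqif (dimv_leqif_sup (addvSr _ _))) subv_add -memvE negb_and zA //.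
Qed.

Lemma sp_repr (A : {set G}) v : v \in sp A -> exists alpha : G -> R,
  forall k, v k = \sum_(x in A) alpha x * sig x k.
Proof.
move=> vA.
set s := [seq sig x | x <- enum A].
have Hv := coord_span (X := in_tuple s) vA.
exists (fun x => \sum_(i < size s | nth x (enum A) i == x) coord (in_tuple s) i v) => k.
rewrite {1}Hv sum_ffunE.
under eq_bigr do rewrite ffunE.
under [RHS]eq_bigr do rewrite mulr_suml.
rewrite (exchange_big_dep predT) //=.
apply: eq_bigr => i _.
have ilt : (i < size (enum A))%N by rewrite -(size_map sig); exact: ltn_ord.
set x1 := tnth (in_tuple (enum A)) (Ordinal ilt).
have x1A : x1 \in A by rewrite -mem_enum; exact: mem_tnth.
rewrite (eq_bigl (pred1 x1)) => [|x]; last first.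
  have -> : nth x (enum A) i = x1 by rewrite /x1 (tnth_nth x).
  by rewrite /= eq_sym; case: eqP => [->|]; rewrite ?x1A ?andbF.
rewrite big_pred1_eq ffunE.
have e : x1 = nth x1 (enum A) i by exact: tnth_nth.
by rewrite (nth_map x1) // -e ffunE.
Qed.

Lemma fullb_DAff (A : {set G}) : fullb A -> DAff_full R A.
Proof.
move=> fA z.
have /sp_repr [alpha Ha] : sig z \in sp A.
  by apply: (subvP fA); apply: sp_mem; rewrite inE.
exists alpha; split.
  have := Ha None; rewrite ffunE => ->.
  by apply: eq_bigr => x _; rewrite ffunE mulr1.
by move=> k; have := Ha (Some k); rewrite ffunE => ->; apply: eq_bigr => x _; rewrite ffunE.
Qed.

Definition NN := (m * (d - 1)).+1.

Lemma rk_setT : (0 < d)%N -> (rk setT <= NN)%N.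
Proof.
move=> d0; set a0 : 'I_d := Ordinal d0.
set x0 : G := [ffun => a0].
pose upd (i : 'I_m) (b : 'I_d) : G := [ffun j => if j == i then b else x0 j].
set bs := [seq b <- enum 'I_d | b != a0].
set Y := sig x0 :: [seq sig (upd i b) | i <- enum 'I_m, b <- bs].
have sY : size Y = NN.
  rewrite /Y /= size_allpairs size_enum_ord /bs size_filter.
  rewrite (eq_count (a2 := predC1 a0)) // -size_filter.
  by rewrite size_filterC1 /NN subn1.
have HY : forall z, sig z \in <<Y>>%VS.
  move=> z.
  have -> : sig z = sig x0 + \sum_i (sig (upd i (z i)) - sig x0).
    apply/ffunP => -[[p a]|]; rewrite !ffunE sum_ffunE;
      under eq_bigr do rewrite !ffunE.
      rewrite (bigD1 p) //= big1 ?addr0.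
        by rewrite /onehot /= !ffunE eqxx /= addrC subrK.
      by move=> i; rewrite eq_sym => /negbTE ip; rewrite /onehot /= !ffunE ip subrr.
    by rewrite big1 ?addr0 // => i _; rewrite subrr.
  have Hu : forall i, sig (upd i (z i)) \in <<Y>>%VS.
    move=> i; apply: memv_span; case: (eqVneq (z i) a0) => zi.
      have -> : upd i (z i) = x0.
        by apply/ffunP => j; rewrite !ffunE; case: eqP => // ->; rewrite zi.
      exact: mem_head.
    rewrite inE; apply/orP; right; apply: allpairs_f; first by rewrite mem_enum.
    by rewrite mem_filter zi mem_enum.
  apply: memvD; first by apply: memv_span; exact: mem_head.
  apply: memv_suml => i _; apply: memvB => //; apply: memv_span; exact: mem_head.
rewrite -sY; apply: leq_trans (dim_span Y); apply: dimvS; apply: sp_sub => x _; exact: HY.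
Qed.

Lemma full_of_rk (A : {set G}) : (0 < d)%N -> (NN <= rk A)%N -> fullb A.
Proof.
move=> d0 H.
have /eqP E : sp A == sp setT.
  by rewrite eqEdim sp_mono ?subsetT //= (leq_trans (rk_setT d0) H).
by rewrite /fullb E subvv.
Qed.

Definition th : R := 1 - (d%:R)^-1.

Lemma th_ge0 : (0 < d)%N -> 0 <= th.
Proof.
move=> d0; rewrite /th subr_ge0 invf_le1 ?ler1n // ltr0n //.
Qed.

Lemma th_le1 : th <= 1.
Proof. by rewrite /th lerBlDr lerDl invr_ge0 ler0n. Qed.

Lemma th_step t : (t.+2 <= d)%N -> t.+1%:R * th ^+ t <= t.+2%:R * th ^+ t.+1.
Proof.
move=> td.
have d0 : (0 < d)%N by apply: leq_trans td.
rewrite exprS mulrA [_ * th]mulrC.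
apply: ler_wpM2r; first exact: exprn_ge0 (th_ge0 d0).
have h : d%:R^-1 * t.+2%:R <= 1 :> R.
  by rewrite mulrC ler_pdivrMr ?ltr0n // mul1r ler_nat.
have e : t.+2%:R = t.+1%:R + 1 :> R by rewrite -natr1.
rewrite /th mulrBl mul1r e; rewrite e in h; lra.
Qed.

Lemma s_theta s : (0 < s <= d)%N -> s%:R * th ^+ s.-1 <= d%:R * th ^+ d.-1.
Proof.
case: s => // t /= td.
have [j e] : exists j, d = (t.+1 + j)%N by exists (d - t.+1)%N; rewrite subnKC.
elim: j t e {td} => [|j IH] t e.
  have -> : d.-1 = t by rewrite e addn0.
  by have -> : d%:R = t.+1%:R :> R by rewrite e addn0.
apply: le_trans (IH t.+1 _); last by rewrite e; lia.
have := @th_step t; apply; rewrite e; lia.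
Qed.

Lemma sig_neq0 x : sig x != 0.
Proof.
apply/eqP => /ffunP /(_ None); rewrite !ffunE => /eqP; by rewrite oner_eq0.
Qed.

Lemma rk1 x : (1 <= rk [set x])%N.
Proof.
have h := @rk_add set0 x; rewrite setU0 in h.
apply: leq_ltn_trans (leq0n (rk set0)) (h _).
rewrite /sp enum_set0 /= span_nil memv0; exact: sig_neq0.
Qed.

Lemma card_slices (Z : {set G}) (i : 'I_m) :
  #|Z| = (\sum_(a : 'I_d) #|[set z in Z | z i == a]|)%N.
Proof.
rewrite -sum1_card (partition_big (fun z : G => z i) (fun _ : 'I_d => true)) //=.
apply: eq_bigr => a _; rewrite -sum1_card; apply: eq_bigl => z; by rewrite inE.
Qed.

Lemma static k : (0 < d)%N -> (k <= m)%N -> forall Z : {set G},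
  (forall x y, x \in Z -> y \in Z -> forall i : 'I_m, (k <= i)%N -> x i = y i) ->
  #|Z|%:R * th ^+ (rk Z) <= (d ^ k)%:R * th ^+ (k * (d - 1)).+1.
Proof.
move=> d0; have t0 := th_ge0 d0; have t1 := th_le1.
elim: k => [|k IH] km Z HZ.
  case: (set_0Vmem Z) => [->|[x xZ]]; first by rewrite cards0 mul0r mul1r expr1.
  have -> : Z = [set x].
    apply/setP => y; rewrite inE; apply/idP/eqP => [yZ|->//].
    by apply/ffunP => i; apply: HZ.
  rewrite cards1 !mul1r expr1 -{2}(expr1 th); apply: ler_wiXn2l => //; exact: rk1.
set i0 : 'I_m := Ordinal km.
pose Zs a := [set z in Z | z i0 == a].
have HZs : forall a, #|Zs a|%:R * th ^+ rk (Zs a) <= (d ^ k)%:R * th ^+ (k * (d - 1)).+1.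
  move=> a; apply: IH; first exact: ltnW.
  move=> x y; rewrite !inE => /andP [xZ /eqP xa] /andP [yZ /eqP ya] i ki.
  case: (eqVneq i i0) => [->|ne]; first by rewrite xa ya.
  apply: HZ => //.
  have : val i != k by apply: contra ne => /eqP e; apply/eqP/val_inj.
  by rewrite ltn_neqAle eq_sym => -> /=.
case: (set_0Vmem Z) => [->|[x xZ]].
  by rewrite cards0 mul0r; apply: mulr_ge0; [exact: ler0n | exact: exprn_ge0].
set A := [set a | Zs a != set0].
have xA : x i0 \in A by rewrite inE; apply/set0Pn; exists x; rewrite inE xZ eqxx.
case: (arg_maxnP (fun a => rk (Zs a)) xA) => a0 a0A' Hmax.
have a0A : a0 \in A := a0A'.
set r0 := rk (Zs a0).
pose w b := odflt x [pick z in Zs b].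
have wP : forall b, b \in A -> w b \in Zs b.
  move=> b; rewrite inE /w; case: pickP => [z -> //|H] /set0Pn [y].
  by rewrite H.
have wi : forall b, b \in A -> w b i0 = b.
  by move=> b /wP; rewrite inE => /andP [_ /eqP].
have Hrk : forall L : seq 'I_d, uniq L -> {subset L <= A :\ a0} ->
    (r0 + size L <= rk (Zs a0 :|: [set:: map w L]))%N.
  elim => [|b L IHL] /=; first by rewrite addn0 set_nil setU0.
  move=> /andP [bL uL] sub.
  have bA : b \in A :\ a0 := sub b (mem_head _ _).
  have sub' : {subset L <= A :\ a0} by move=> c cL; apply: sub; rewrite inE cL orbT.
  rewrite set_cons setUCA addnS; apply: leq_ltn_trans (IHL uL sub') (rk_add _).
  apply/negP => /sp_repr [alpha Ha].
  move: bA; rewrite !inE => /andP [ba0 bA].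
  have := Ha (Some (i0, b)); rewrite ffunE /onehot /= wi ?inE // eqxx.
  rewrite big1 => [/eqP|y]; first by rewrite oner_eq0.
  rewrite !inE => /orP [/andP [_ /eqP ya]|].
    by rewrite ffunE /onehot /= ya eq_sym (negbTE ba0) mulr0.
  move=> /mapP [c cL ->].
  have : c \in A :\ a0 := sub' c cL.
  rewrite !inE => /andP [_ cA].
  rewrite ffunE /onehot /= wi ?inE //.
  have -> : (c == b) = false by apply/eqP => cb; move: bL; rewrite -cb cL.
  by rewrite mulr0.
have Hsub : Zs a0 :|: [set:: map w (enum (A :\ a0))] \subset Z.
  apply/subsetP => y; rewrite !inE => /orP [/andP [] //|/mapP [c]].
  rewrite mem_enum !inE => /andP [_ cA] ->.
  have cA' : c \in A by rewrite inE.
  by have := wP c cA'; rewrite inE => /andP [].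
have rkZ : (r0 + (#|A| - 1) <= rk Z)%N.
  apply: leq_trans (rk_mono Hsub).
  have := Hrk (enum (A :\ a0)) (enum_uniq _) (fun c cL => etrans (esym (mem_enum _ c)) cL).
  by rewrite -cardE (cardsD1 a0 A) a0A add1n subn1.
pose C := (d ^ k)%:R * th ^+ (k * (d - 1)).+1.
have C0 : 0 <= C by apply: mulr_ge0; [exact: ler0n | exact: exprn_ge0].
have s1 : (0 < #|A| <= d)%N.
  apply/andP; split; first by apply/card_gt0P; exists a0.
  by apply: leq_trans (max_card _) _; rewrite card_ord.
have step1 : #|Z|%:R * th ^+ rk Z <= #|Z|%:R * th ^+ r0 * th ^+ (#|A| - 1).
  rewrite -mulrA -exprD; apply: ler_wpM2l; first exact: ler0n.
  by apply: ler_wiXn2l.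
have step2 : #|Z|%:R * th ^+ r0 <= #|A|%:R * C.
  rewrite (card_slices Z i0) natr_sum mulr_suml.
  apply: le_trans (_ : \sum_a (a \in A)%:R * C <= _).
    apply: ler_sum => a _; case: (boolP (a \in A)) => aA.
      rewrite mul1r; apply: le_trans (HZs a); apply: ler_wpM2l; first exact: ler0n.
      by apply: ler_wiXn2l => //; exact: Hmax.
    by move: aA; rewrite inE negbK => /eqP; rewrite /Zs => ->; rewrite cards0 !mul0r.
  rewrite -mulr_suml; apply: ler_wpM2r => //.
  rewrite (eq_bigr (fun a => if a \in A then 1 else 0)) => [|a _]; last by case: (a \in A).
  by rewrite -big_mkcond sumr_const.
apply: le_trans step1 _.
apply: le_trans (ler_wpM2r (exprn_ge0 _ t0) step2) _.
rewrite mulrAC -mulrA subn1 mulrA.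
apply: le_trans (ler_wpM2r C0 (s_theta s1)) _.
rewrite /C expnS natrM mulrACA -exprD.
have -> : (d.-1 + (k * (d - 1)).+1 = (k.+1 * (d - 1)).+1)%N.
  by rewrite mulSn addnS subn1.
by [].
Qed.

Definition qq j := 1 - th ^+ j.
Definition gg (k : nat) : R := \sum_(j < k) (qq j.+1)^-1.
Definition Phi (S : {set G}) := gg (NN - rk S).
Definition nf (S : {set G}) : R := (~~ fullb S)%:R.

Lemma th_lt1 : (0 < d)%N -> th < 1.
Proof. by move=> d0; rewrite /th ltrBlDr ltrDl invr_gt0 ltr0n. Qed.

Lemma qq_gt0 j : (0 < d)%N -> (0 < j)%N -> 0 < qq j.
Proof.
move=> d0 j0; rewrite /qq subr_gt0.
apply: le_lt_trans (th_lt1 d0); rewrite -{2}(expr1 th).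
by apply: ler_wiXn2l => //; [exact: th_ge0 | exact: th_le1].
Qed.

Lemma gg_step k : gg k.+1 = gg k + (qq k.+1)^-1.
Proof. by rewrite /gg big_ord_recr. Qed.

Lemma gg_mono a b : (0 < d)%N -> (a <= b)%N -> gg a <= gg b.
Proof.
move=> d0; elim: b => [|b IH]; first by rewrite leqn0 => /eqP ->.
rewrite leq_eqVlt => /orP [/eqP -> //|ab].
apply: le_trans (IH ab) _; rewrite gg_step lerDl invr_ge0 ltW //; exact: qq_gt0.
Qed.

Lemma gg_ge0 a : (0 < d)%N -> 0 <= gg a.
Proof. by move=> d0; have := gg_mono d0 (leq0n a); rewrite /gg big_ord0. Qed.

Lemma Phi_mono (A B : {set G}) : (0 < d)%N -> A \subset B -> Phi B <= Phi A.
Proof. by move=> d0 AB; apply: gg_mono => //; apply: leq_sub2l; apply: rk_mono. Qed.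

Lemma card_G : #|G| = (d ^ m)%N.
Proof. by rewrite card_ffun !card_ord. Qed.

Lemma drift (S : {set G}) n : (0 < d)%N ->
  \sum_x (Phi (x |: S) + n.+1%:R * nf (x |: S)) <= #|G|%:R * (Phi S + n%:R * nf S).
Proof.
move=> d0.
case fS : (fullb S).
  rewrite /nf fS /= mulr0 addr0 mulr_natl -sumr_const.
  apply: ler_sum => x _.
  rewrite (fullb_mono (subsetUr [set x] S) fS) /= mulr0 addr0.
  by apply: Phi_mono => //; exact: subsetUr.
rewrite /nf fS /= mulr1.
set dl := (NN - rk S)%N.
have dl0 : (0 < dl)%N.
  rewrite subn_gt0 ltnNge; apply/negP => H.
  by move: fS; rewrite full_of_rk.
set Zc := [set x | sig x \in sp S].
have qd := qq_gt0 d0 dl0.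
have pw : forall x, Phi (x |: S) <= Phi S - (1 - (x \in Zc)%:R) / qq dl.
  move=> x; case: (boolP (x \in Zc)) => xZ.
    by rewrite subrr mul0r subr0; apply: Phi_mono => //; exact: subsetUr.
  rewrite subr0 /Phi.
  have e : dl = dl.-1.+1 by rewrite prednK.
  rewrite -/dl e gg_step mul1r addrK.
  apply: gg_mono => //.
  have := rk_add (A := S) (z := x); rewrite inE in xZ => /(_ xZ) h.
  by rewrite /dl -subn1 -subnDA addn1; apply: leq_sub2l.
have nf1 : forall x, (~~ fullb (x |: S))%:R <= 1 :> R by move=> x; case: (fullb _).
have HZc : #|Zc|%:R <= #|G|%:R * th ^+ dl :> R.
  have Hs := static d0 (leqnn m) (Z := Zc).
  have /Hs {}Hs : forall x y, x \in Zc -> y \in Zc -> forall i : 'I_m, (m <= i)%N -> x i = y i.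
    by move=> x y _ _ i; rewrite leqNgt ltn_ord.
  have rkZ : (rk Zc <= rk S)%N by apply: dimvS; apply: sp_sub => x; rewrite inE.
  have rS : (rk S < NN)%N by rewrite -subn_gt0.
  have eN : (m * (d - 1)).+1 = (rk S + dl)%N by rewrite /dl subnKC // ltnW.
  have tpos : 0 < th ^+ rk S.
    case: (eqVneq d 1) => [d1|d1].
      by move: rS; rewrite /NN d1 subnn muln0 ltnS leqn0 => /eqP ->; rewrite expr0 ltr01.
    apply: exprn_gt0; rewrite /th subr_gt0 invf_lt1 ?ltr0n // ltr1n.
    by rewrite ltn_neqAle eq_sym d1.
  rewrite -(ler_pM2r tpos) card_G -mulrA -exprD addnC -eN.
  apply: le_trans Hs; apply: ler_wpM2l; first exact: ler0n.
  by apply: ler_wiXn2l => //; [exact: th_ge0 | exact: th_le1].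
apply: le_trans (_ : \sum_(x : G) (Phi S - (1 - (x \in Zc)%:R) / qq dl + n.+1%:R) <= _).
  apply: ler_sum => x _; apply: lerD => //.
  by rewrite -[X in _ <= X]mulr1; apply: ler_wpM2l => //; exact: ler0n.
rewrite big_split /= sumrB -mulr_suml sumrB sum_ind !sumr_const.
have cT : #|(xpredT : pred G)| = #|G| by apply: eq_card.
rewrite cT.
set Gc := #|G|%:R; set Zr := #|Zc|%:R.
have eq1 : Gc <= (Gc - Zr) / qq dl.
  rewrite ler_pdivlMr // /qq mulrBr mulr1.
  move: HZc; rewrite -/Gc -/Zr; move: (Gc * th ^+ dl) => t; lra.
move: eq1; set y := (Gc - Zr) / qq dl => eq1.
rewrite -[Phi S *+ _]mulr_natr -[n.+1%:R *+ _]mulr_natr -/Gc.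
have -> : Phi S * Gc - y + n.+1%:R * Gc = Gc * (Phi S + n%:R) + (Gc - y).
  by rewrite -addn1 natrD; ring.
by rewrite gerDl subr_le0.
Qed.

Definition ext n (x : G) (t : {ffun 'I_n -> G}) : {ffun 'I_n.+1 -> G} :=
  [ffun i => if unlift ord0 i is Some j then t j else x].

Lemma sample_ext n x (t : {ffun 'I_n -> G}) :
  sample_set (ext x t) = x |: sample_set t.
Proof.
apply/setP => y; rewrite !inE; apply/imsetP/orP.
  move=> [i _ ->]; rewrite ffunE; case: unliftP => [j _|_]; last by left.
  by right; apply/imsetP; exists j.
move=> [/eqP ->|/imsetP [j _ ->]].
  by exists ord0 => //; rewrite ffunE unlift_none.
by exists (lift ord0 j) => //; rewrite ffunE liftK.
Qed.

Lemma sum_ext n (F : {ffun 'I_n.+1 -> G} -> R) :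
  \sum_u F u = \sum_x \sum_(t : {ffun 'I_n -> G}) F (ext x t).
Proof.
rewrite pair_big /=.
pose h (p : G * {ffun 'I_n -> G}) := ext p.1 p.2.
pose h' (u : {ffun 'I_n.+1 -> G}) := (u ord0, [ffun j => u (lift ord0 j)]).
rewrite (reindex h) //=.
apply: onW_bij; exists h'.
  move=> [x t]; rewrite /h /h' /= ffunE unlift_none; congr pair.
  by apply/ffunP => j; rewrite !ffunE liftK.
move=> u; apply/ffunP => i; rewrite /h /h' /= ffunE.
by case: unliftP => [j ->|->]; rewrite ?ffunE.
Qed.

Lemma sample_set0 (t : {ffun 'I_0 -> G}) : sample_set t = set0.
Proof. by apply/setP => y; rewrite inE; apply/imsetP => -[[]]. Qed.

Lemma count_bound n : (0 < d)%N ->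
  \sum_(t : {ffun 'I_n -> G}) (Phi (sample_set t) + n%:R * nf (sample_set t))
    <= (#|G| ^ n)%:R * Phi set0.
Proof.
move=> d0; elim: n => [|n IH].
  under eq_bigr do rewrite sample_set0 mul0r addr0.
  by rewrite sumr_const card_ffun card_ord /= mul1r.
rewrite sum_ext.
under eq_bigr do under eq_bigr do rewrite sample_ext.
rewrite exchange_big /=.
apply: le_trans (_ : \sum_(t : {ffun 'I_n -> G}) #|G|%:R *
   (Phi (sample_set t) + n%:R * nf (sample_set t)) <= _).
  by apply: ler_sum => t _; exact: drift.
rewrite -mulr_sumr expnS natrM -mulrA ler_wpM2l //; exact: ler0n.
Qed.

Lemma Phi_set0 : Phi set0 = gg NN.
Proof. by rewrite /Phi /rk /sp enum_set0 /= span_nil dimv0 subn0. Qed.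


Lemma th_pow j : (0 < d)%N -> th ^+ j * (d%:R + j%:R) <= d%:R.
Proof.
move=> d0; elim: j => [|j IH]; first by rewrite expr0 mul1r addr0.
apply: le_trans IH.
rewrite exprSr -mulrA; apply: ler_wpM2l; first exact: exprn_ge0 (th_ge0 d0).
have dp : (0 : R) < d%:R by rewrite ltr0n.
rewrite /th mulrBl mul1r -natr1.
have : 1 <= (d%:R)^-1 * (d%:R + j%:R + 1) :> R.
  rewrite ler_pdivlMl // mulr1; have := ler0n R j; lra.
lra.
Qed.

Lemma inv_qq j : (0 < d)%N -> (qq j.+1)^-1 <= 1 + d%:R / j.+1%:R.
Proof.
move=> d0.
have qp := qq_gt0 d0 (ltn0Sn j).
have Jp : (0 : R) < j.+1%:R by rewrite ltr0n.
have dp : (0 : R) <= d%:R by exact: ler0n.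
have h := th_pow j.+1 d0.
set T := th ^+ j.+1 in h *.
set u := d%:R / j.+1%:R.
have eD : d%:R = u * j.+1%:R by rewrite /u mulfVK ?gt_eqF.
rewrite eD in h.
have hu : T * (u + 1) <= u.
  rewrite -(ler_pM2r Jp).
  have -> : T * (u + 1) * j.+1%:R = T * (u * j.+1%:R + j.+1%:R) by ring.
  by [].
rewrite -[(qq _)^-1]mul1r ler_pdivrMr // /qq -/T.
have -> : (1 + u) * (1 - T) = 1 + u - T * (u + 1) by ring.
move: hu; move: (T * (u + 1)) => w; lra.
Qed.


Lemma gg_bound : (0 < d)%N -> gg NN <= 2 * d%:R * (m%:R + 1 + ln (d%:R : R)).
Proof.
move=> d0.
have dp : (0 : R) < d%:R by rewrite ltr0n.
have NN0 : (0 < NN)%N by [].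
have h1 : gg NN <= NN%:R + d%:R * (1 + ln (NN%:R : R)).
  apply: le_trans (_ : \sum_(j < NN) (1 + d%:R / j.+1%:R) <= _).
    by apply: ler_sum => j _; exact: inv_qq.
  rewrite big_split /= sumr_const card_ord -mulr_sumr.
  apply: lerD => //; apply: ler_wpM2l; [exact: ltW | exact: harm].
have h2 : ln (NN%:R : R) <= ln (d%:R : R) + m%:R.
  have hN : (NN <= d * m.+1)%N by rewrite /NN; nia.
  have mp : (0 : R) < m.+1%:R by rewrite ltr0n.
  apply: le_trans (_ : ln ((d * m.+1)%N%:R : R) <= _).
    by rewrite ler_ln ?posrE ?ltr0n ?muln_gt0 ?d0 // ler_nat.
  rewrite natrM lnM ?posrE // lerD2l -addn1 natrD addrC.
  apply: le_ln1Dx; apply: lt_le_trans (ler0n _ _); rewrite ltrN10.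
  done.
have h3 : NN%:R <= d%:R * m%:R + d%:R :> R.
  by rewrite -natrM -natrD ler_nat /NN; nia.
have h4 : 0 <= d%:R * ln (d%:R : R).
  by apply: mulr_ge0; [exact: ltW | apply: ln_ge0; rewrite ler1n].
have h5 : d%:R * ln (NN%:R : R) <= d%:R * (ln (d%:R : R) + m%:R).
  by apply: ler_wpM2l => //; exact: ltW.
rewrite mulrDr mulr1 in h1.
have e1 : 2 * d%:R * (m%:R + 1 + ln (d%:R : R)) =
  2 * (d%:R * m%:R) + 2 * d%:R + 2 * (d%:R * ln (d%:R : R)) by ring.
have e2 : d%:R * (ln (d%:R : R) + m%:R) = d%:R * ln (d%:R : R) + d%:R * m%:R by ring.
rewrite e1; rewrite e2 in h5.
move: h1 h3 h4 h5; move: (d%:R * m%:R) (d%:R * ln (d%:R : R)) (d%:R * ln (NN%:R : R)) => a b c.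
move: (gg NN) (NN%:R : R) (d%:R : R) => g N D.
lra.
Qed.

End Lin.

Theorem theorem7 (R : realType) (d m n : nat) (c : R) :
  (0 < d)%N -> 0 < c ->
  2 * c * d%:R * (m%:R + 1 + ln (d%:R : R)) < n%:R ->
  1 - c^-1 <= prob_DAff_full R d m n.
Proof.
move=> d0 c0 hn.
have hc := count_bound R m n d0.
rewrite Phi_set0 in hc.
have hb := gg_bound R m d0.
set P0 := gg R d (NN d m) in hc hb.
set K := ((#|{: grid d m}| ^ n)%N)%:R : R.
have Kp : 0 < K by rewrite ltr0n expn_gt0 card_G // expn_gt0 d0.
set B := \sum_(t : {ffun 'I_n -> grid d m}) nf R (sample_set t).
have hB : n%:R * B <= K * P0.
  apply: le_trans hc; rewrite /B mulr_sumr; apply: ler_sum => t _.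
  by rewrite lerDr; apply: gg_ge0.
have B0 : 0 <= B by apply: sumr_ge0 => t _; exact: ler0n.
have hnum : K - B <= #|[set t : {ffun 'I_n -> grid d m} | `[< DAff_full R (sample_set t) >]]|%:R.
  apply: le_trans (_ : #|[set t : {ffun 'I_n -> grid d m} | fullb R (sample_set t)]|%:R <= _).
    rewrite -sum_ind /B /K.
    have eK : (#|grid d m| ^ n)%N = #|{ffun 'I_n -> grid d m}|.
      by rewrite [RHS]card_ffun card_ord.
    have eS : \sum_(t : {ffun 'I_n -> grid d m}) (1 : R) = #|{ffun 'I_n -> grid d m}|%:R.
      by rewrite sumr_const.
    rewrite eK -eS -sumrB; apply: ler_sum => t _; rewrite inE /nf.
    by case: (fullb _ _); rewrite ?subrr ?subr0.
  rewrite ler_nat; apply: subset_leq_card; apply/subsetP => t; rewrite !inE => ft.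
  by apply/asboolP; apply: fullb_DAff.
rewrite /prob_DAff_full -/K ler_pdivlMr //.
apply: le_trans hnum.
have hcP : c * P0 <= n%:R.
  apply: le_trans (ltW hn); rewrite [2 * c]mulrC -!mulrA ler_pM2l // mulrA; exact: hb.
have np : 0 < n%:R :> R.
  apply: le_lt_trans hn; apply: mulr_ge0.
    by apply: mulr_ge0; [apply: mulr_ge0; [lra | exact: ltW] | exact: ler0n].
  have := ln_ge0 (x := d%:R : R); rewrite ler1n => /(_ d0) h.
  have := ler0n R m; lra.
have hcB : c * B <= K.
  rewrite -(ler_pM2r np).
  apply: le_trans (_ : c * (K * P0) <= _).
    by rewrite -mulrA [B * _]mulrC ler_pM2l.
  by rewrite mulrCA ler_pM2l.
have : B <= K / c by rewrite ler_pdivlMr // mulrC.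
rewrite mulrBl mul1r mulrC; lra.
Qed.
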